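(* Consider a mean-variance team stochastic game as described in the context. Let $\boldsymbol{\mu},\boldsymbol{\mu}'\in\mathcal{U}$ and for $\delta\in[0,1]$ let $\delta_{\boldsymbol{\mu}}^{\boldsymbol{\mu}'}$ be the (centralized) stationary policy $\delta_{\boldsymbol{\mu}}^{\boldsymbol{\mu}'}(\boldsymbol{a}|s)=(1-\delta)\boldsymbol{\mu}(\boldsymbol{a}|s)+\delta\boldsymbol{\mu}'(\boldsymbol{a}|s)$ (the joint action follows $\boldsymbol{\mu}$ with probability $1-\delta$ and $\boldsymbol{\mu}'$ with probability $\delta$). Then $$\frac{\mathrm{d}J(\delta_{\boldsymbol{\mu}}^{\boldsymbol{\mu}'})}{\mathrm{d}\delta}\Big|_{\delta=0}=\mathbb{E}_{s\sim\pi^{\boldsymbol{\mu}},\,\boldsymbol{a}\sim\boldsymbol{\mu}'(\cdot|s)}\big[A_f^{\boldsymbol{\mu}}(s,\boldsymbol{a})\big],$$ where the derivative at $\delta=0$ is the one-sided (right) derivative.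
   Context: A team stochastic game consists of a finite set of agents $\mathcal{N}=\{1,\dots,N\}$, a finite state space $\mathcal{S}$, finite action sets $\mathcal{A}_i$ with joint action set $\mathcal{A}=\prod_i\mathcal{A}_i$, a transition kernel $P(s'|s,\boldsymbol{a})$ and a common reward $r:\mathcal{S}\times\mathcal{A}\to\mathbb{R}$. A policy of agent $i$ is $\mu_i:\mathcal{S}\to\Delta(\mathcal{A}_i)$ (set $\mathcal{U}_i$); a joint policy $\boldsymbol{\mu}\in\mathcal{U}=\prod_i\mathcal{U}_i$ has $\boldsymbol{\mu}(\boldsymbol{a}|s)=\prod_i\mu_i(a_i|s)$. More generally, any centralized stationary policy $\sigma:\mathcal{S}\to\Delta(\mathcal{A})$ induces the chain $P^{\sigma}(s'|s)=\sum_{\boldsymbol{a}}\sigma(\boldsymbol{a}|s)P(s'|s,\boldsymbol{a})$. Standing assumption: for every joint policy $\boldsymbol{\mu}\in\mathcal{U}$ the induced chain is ergodic; $\pi^{\sigma}$ denotes the stationary distribution of the chain induced by $\sigma$. For such $\sigma$: $\eta^{\sigma}=\sum_s\pi^{\sigma}(s)\sum_{\boldsymbol{a}}\sigma(\boldsymbol{a}|s)r(s,\boldsymbol{a})$, $\zeta^{\sigma}=\sum_s\pi^{\sigma}(s)\sum_{\boldsymbol{a}}\sigma(\boldsymbol{a}|s)(r(s,\boldsymbol{a})-\eta^{\sigma})^2$, and for fixed $\beta\ge0$, $J(\sigma)=J^{\sigma}=\eta^{\sigma}-\beta\zeta^{\sigma}$. Surrogate reward $f^{\sigma}(s,\boldsymbol{a})=r(s,\boldsymbol{a})-\beta(r(s,\boldsymbol{a})-\eta^{\sigma})^2$,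 $f^{\sigma}(s)=\sum_{\boldsymbol{a}}\sigma(\boldsymbol{a}|s)f^{\sigma}(s,\boldsymbol{a})$. $V_f^{\sigma}$ is a solution of the Poisson equation $V(s)=f^{\sigma}(s)-J^{\sigma}+\sum_{s'}P^{\sigma}(s'|s)V(s')$ (unique up to an additive constant, irrelevant below); $Q_f^{\sigma}(s,\boldsymbol{a})=f^{\sigma}(s,\boldsymbol{a})-J^{\sigma}+\sum_{s'}P(s'|s,\boldsymbol{a})V_f^{\sigma}(s')$; $A_f^{\sigma}(s,\boldsymbol{a})=Q_f^{\sigma}(s,\boldsymbol{a})-V_f^{\sigma}(s)$. *)

(* Defs.v *)
From HB Require Import structures.
From mathcomp Require Import all_boot all_order all_algebra.
From mathcomp Require Import all_classical all_reals all_analysis.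
From Stdlib Require Import ClassicalEpsilon.

Set Implicit Arguments.
Unset Strict Implicit.
Unset Printing Implicit Defensive.

Import Order.TTheory GRing.Theory Num.Theory.
Local Open Scope ring_scope.

Section TeamGame.
Variable R : realType.
Variable S : finType.
Variable N : nat.
Variable A : 'I_N -> finType.

Definition jact := {dffun forall i : 'I_N, A i}.

Variable P : S -> jact -> S -> R.   (* P s a s' = P(s'|s,a) *)
Variable r : S -> jact -> R.
Variable beta : R.

Definition kernel_ok :=
  (forall s a s', 0 <= P s a s') /\ (forall s a, \sum_(s' : S) P s a s' = 1).

Definition agent_policy (i : 'I_N) (mui : S -> A i -> R) :=
  (forall s a, 0 <= mui s a) /\ (forall s, \sum_(a : A i) mui s a = 1).

Definition joint (mu : forall i : 'I_N, S -> A i -> R) : S -> jact -> R :=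
  fun s a => \prod_(i < N) mu i s (a i).

Definition induced_chain (sigma : S -> jact -> R) : S -> S -> R :=
  fun s s' => \sum_(a : jact) sigma s a * P s a s'.

Fixpoint nstep (Q : S -> S -> R) (k : nat) : S -> S -> R :=
  match k with
  | 0%N => fun s s' => if s == s' then 1 else 0
  | k'.+1 => fun s s' => \sum_(t : S) nstep Q k' s t * Q t s'
  end.

(* ergodic finite chain: irreducible and aperiodic, i.e. some power of the
   transition matrix is entrywise positive *)
Definition ergodic (Q : S -> S -> R) :=
  exists k : nat, forall s s', 0 < nstep Q k s s'.

Definition stationary (Q : S -> S -> R) (pi : S -> R) :=
  (forall s, 0 <= pi s) /\ \sum_(s : S) pi s = 1 /\
  (forall s', \sum_(s : S) pi s * Q s s' = pi s').

(* pi^sigma : the stationary distribution of the chain induced_chain by sigma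
   (unique whenever that chain is ergodic) *)
Definition stat_dist (sigma : S -> jact -> R) : S -> R :=
  epsilon (inhabits (fun _ : S => 0)) (stationary (induced_chain sigma)).

Definition eta_avg (sigma : S -> jact -> R) : R :=
  \sum_(s : S) stat_dist sigma s * \sum_(a : jact) sigma s a * r s a.

Definition zeta (sigma : S -> jact -> R) : R :=
  \sum_(s : S) stat_dist sigma s *
    \sum_(a : jact) sigma s a * (r s a - eta_avg sigma) ^+ 2.

Definition J (sigma : S -> jact -> R) : R := eta_avg sigma - beta * zeta sigma.

Definition fsur (sigma : S -> jact -> R) (s : S) (a : jact) : R :=
  r s a - beta * (r s a - eta_avg sigma) ^+ 2.

Definition fsur_state (sigma : S -> jact -> R) (s : S) : R :=
  \sum_(a : jact) sigma s a * fsur sigma s a.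

Definition poisson (sigma : S -> jact -> R) (V : S -> R) :=
  forall s, V s = fsur_state sigma s - J sigma
                  + \sum_(s' : S) induced_chain sigma s s' * V s'.

Definition Qf (sigma : S -> jact -> R) (V : S -> R) (s : S) (a : jact) : R :=
  fsur sigma s a - J sigma + \sum_(s' : S) P s a s' * V s'.

Definition Af (sigma : S -> jact -> R) (V : S -> R) (s : S) (a : jact) : R :=
  Qf sigma V s a - V s.

Definition mix (sigma sigma' : S -> jact -> R) (d : R) : S -> jact -> R :=
  fun s a => (1 - d) * sigma s a + d * sigma' s a.

End TeamGame.

(* Main.v *)
Require Import Defs.
From HB Require Import structures.
From mathcomp Require Import all_boot all_order all_algebra.
From mathcomp Require Import all_classical all_reals all_analysis.
From mathcomp Require Import ring lra.
From Stdlib Require Import ClassicalEpsilon.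
Import Order.TTheory GRing.Theory Num.Theory.
Local Open Scope ring_scope.


Lemma sum_ev {R : realType} {S : finType} (F : S -> R) :
  \sum_(i < #|S|) F (enum_val i) = \sum_s F s.
Proof.
rewrite -(big_enum_val (A := predT) F) /=; by apply: eq_bigl => s; rewrite inE.
Qed.

Lemma stat_exists (R : realType) (S : finType) (Q : S -> S -> R) :
  (forall s s', 0 <= Q s s') -> (forall s, \sum_s' Q s s' = 1) ->
  (0 < #|S|)%N -> exists pi, stationary Q pi.
Proof.
move=> Q0 Q1 Sgt0.
set n := #|S|.
pose M : 'M[R]_n := \matrix_(i, j) (Q (enum_val i) (enum_val j) - (i == j)%:R).
have Mc : M *m (const_mx 1 : 'cV[R]_n) = 0.
  apply/matrixP => i j; rewrite !mxE.
  under eq_bigr do rewrite !mxE mulr1.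
  rewrite sumrB (sum_ev (Q (enum_val i))) Q1.
  rewrite (bigD1 i) //= eqxx big1 ?addr0 ?subrr // => k /negbTE.
  by rewrite eq_sym => ->.
have detM : \det M == 0.
  apply/negPn/negP => hM.
  have uM : M \in unitmx by rewrite unitmxE unitfE.
  have : const_mx 1 = 0 :> 'cV[R]_n.
    by rewrite -(mulKmx uM (const_mx 1)) Mc mulmx0.
  move/matrixP => /(_ (Ordinal Sgt0) 0); rewrite !mxE => /eqP.
  by rewrite oner_eq0.
case/det0P: detM => v v0 vM.
pose x s := v 0 (enum_rank s).
have xQ : forall s', \sum_s x s * Q s s' = x s'.
  move=> s'; move/matrixP: vM => /(_ 0 (enum_rank s')); rewrite !mxE.
  under eq_bigr do rewrite !mxE mulrBr.
  rewrite sumrB.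
  have -> : \sum_(i < n) v 0 i * (i == enum_rank s')%:R = x s'.
    rewrite (bigD1 (enum_rank s')) //= eqxx mulr1 big1 ?addr0 // => k /negbTE ->.
    by rewrite mulr0.
  move/eqP; rewrite subr_eq0 => /eqP <-.
  rewrite -(sum_ev (fun s => x s * Q s s')).
  by apply: eq_bigr => i _; rewrite /x enum_valK enum_rankK.
have [i0 xi0] : exists i, v 0 i != 0.
  apply/existsP; move: v0; apply: contraR => /existsPn h.
  by apply/eqP/matrixP => a b; rewrite !mxE ord1; apply/eqP/negbNE/h.
pose y s := `|x s|.
have yQ : forall s', \sum_s y s * Q s s' = y s'.
  have D0 : forall s', 0 <= \sum_s y s * Q s s' - y s'.
    move=> s'; rewrite subr_ge0 /y -{1}xQ.
    apply: le_trans (ler_norm_sum _ _ _) _.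
    by apply: ler_sum => s _; rewrite normrM (ger0_norm (Q0 _ _)).
  have Ds : \sum_s' (\sum_s y s * Q s s' - y s') = 0.
    rewrite sumrB exchange_big /=.
    under eq_bigr do rewrite -mulr_sumr Q1 mulr1.
    by rewrite subrr.
  move=> s'; apply/eqP; rewrite -subr_eq0; apply/eqP.
  by apply: (psumr_eq0P (fun s _ => D0 s) Ds).
set Z := \sum_s y s.
have Zgt0 : 0 < Z.
  rewrite /Z (bigD1 (enum_val i0)) //= ltr_pwDl ?sumr_ge0 //.
    by rewrite /y normr_gt0 /x enum_valK.
  by move=> s _; exact: normr_ge0.
exists (fun s => y s / Z); rewrite /stationary; split; last split.
- by move=> s; rewrite divr_ge0 ?normr_ge0 // ltW.
- by rewrite -mulr_suml divff // gt_eqF.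
- move=> s'; rewrite -yQ mulr_suml; apply: eq_bigr => s _.
  by rewrite mulrAC.
Qed.


Definition app {R : realType} {S : finType} (x : S -> R) (M : S -> S -> R) : S -> R :=
  fun s' => \sum_s x s * M s s'.

Lemma nstep_stoch {R : realType} {S : finType} (Q : S -> S -> R) :
  (forall s s', 0 <= Q s s') -> (forall s, \sum_s' Q s s' = 1) ->
  forall k, (forall s s', 0 <= nstep Q k s s') /\ (forall s, \sum_s' nstep Q k s s' = 1).
Proof.
move=> Q0 Q1; elim=> [|k [IH0 IH1]] /=.
  split; first by move=> s s'; case: eqP.
  move=> s; rewrite (bigD1 s) //= eqxx big1 ?addr0 // => t /negbTE.
  by rewrite eq_sym => ->.
split.
  by move=> s s'; apply: sumr_ge0 => t _; apply: mulr_ge0.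
move=> s; rewrite exchange_big /=.
under eq_bigr do rewrite -mulr_sumr Q1 mulr1.
exact: IH1.
Qed.

Lemma app_contract {R : realType} {S : finType} (M : S -> S -> R) (x : S -> R) :
  (forall s s', 0 <= M s s') -> (forall s, \sum_s' M s s' = 1) ->
  \sum_s' `|app x M s'| <= \sum_s `|x s|.
Proof.
move=> M0 M1.
apply: le_trans (_ : \sum_s' \sum_s `|x s| * M s s' <= _).
  apply: ler_sum => s' _; apply: le_trans (ler_norm_sum _ _ _) _.
  by apply: ler_sum => s _; rewrite normrM (ger0_norm (M0 _ _)).
rewrite exchange_big /=; apply: ler_sum => s _.
by rewrite -mulr_sumr M1 mulr1.
Qed.

Lemma app_nstep0 {R : realType} {S : finType} (Q : S -> S -> R) x s' :
  app x (nstep Q 0) s' = x s'.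
Proof.
rewrite /app /= (bigD1 s') //= eqxx mulr1 big1 ?addr0 // => t /negbTE ->.
by rewrite mulr0.
Qed.

Lemma app_nstepS {R : realType} {S : finType} (Q : S -> S -> R) x j s' :
  app x (nstep Q j.+1) s' = app (app x (nstep Q j)) Q s'.
Proof.
rewrite /app /=.
under eq_bigr do rewrite mulr_sumr.
under [in RHS]eq_bigr do rewrite mulr_suml.
rewrite exchange_big /=; apply: eq_bigr => t _; apply: eq_bigr => s _.
by rewrite mulrA.
Qed.

Lemma app_sub {R : realType} {S : finType} (M : S -> S -> R) x z s' :
  app x M s' - app z M s' = app (fun t => x t - z t) M s'.
Proof. by rewrite /app -sumrB; apply: eq_bigr => s _; rewrite mulrBl. Qed.

Lemma diff_bound {R : realType} {S : finType} (Q : S -> S -> R) x :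
  (forall s s', 0 <= Q s s') -> (forall s, \sum_s' Q s s' = 1) ->
  forall j, \sum_s' `|app x (nstep Q j.+1) s' - app x (nstep Q j) s'|
    <= \sum_s' `|app x Q s' - x s'|.
Proof.
move=> Q0 Q1; elim=> [|j IH].
  rewrite (eq_bigr (fun s' => `|app x Q s' - x s'|)) // => s' _.
  rewrite app_nstepS !app_nstep0.
  congr (`| _ - _ |); apply: eq_bigr => s _; by rewrite app_nstep0.
apply: le_trans IH.
under eq_bigr do rewrite (app_nstepS _ _ j.+1) (app_nstepS _ _ j) app_sub.
exact: app_contract.
Qed.

Lemma total_bound {R : realType} {S : finType} (Q : S -> S -> R) x :
  (forall s s', 0 <= Q s s') -> (forall s, \sum_s' Q s s' = 1) ->
  forall k, \sum_s' `|app x (nstep Q k) s' - x s'|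
    <= k%:R * \sum_s' `|app x Q s' - x s'|.
Proof.
move=> Q0 Q1; elim=> [|k IH].
  by rewrite mul0r big1 // => s' _; rewrite app_nstep0 subrr normr0.
apply: le_trans (_ : \sum_s' (`|app x (nstep Q k.+1) s' - app x (nstep Q k) s'|
   + `|app x (nstep Q k) s' - x s'|) <= _).
  apply: ler_sum => s' _.
  rewrite (_ : app x (nstep Q k.+1) s' - x s' = (app x (nstep Q k.+1) s' - app x (nstep Q k) s') + (app x (nstep Q k) s' - x s')).
    exact: ler_normD.
  by rewrite addrA subrK.
rewrite big_split /= -natr1 mulrDl mul1r addrC.
by apply: lerD => //; apply: diff_bound.
Qed.

Lemma min_entry {R : realType} {S : finType} (s0 : S) (M : S -> S -> R) :
  (forall s s', 0 < M s s') -> exists m, 0 < m /\ forall s s', m <= M s s'.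
Proof.
move=> M0.
case: (@arg_minP _ R (S * S)%type (s0, s0) xpredT (fun p => M p.1 p.2) isT).
move=> p _ hp; exists (M p.1 p.2); split => // s s'.
exact: (hp (s, s')).
Qed.

Lemma contraction_step {R : realType} {S : finType} (M : S -> S -> R) (m : R) x :
  (forall s s', m <= M s s') -> (forall s, \sum_s' M s s' = 1) ->
  \sum_s x s = 0 ->
  \sum_s' `|app x M s'| <= (1 - m * #|S|%:R) * \sum_s `|x s|.
Proof.
move=> Mm M1 x0.
have e : forall s', app x M s' = \sum_s x s * (M s s' - m).
  move=> s'; rewrite /app.
  under [RHS]eq_bigr do rewrite mulrBr.
  by rewrite sumrB -mulr_suml x0 mul0r subr0.
apply: le_trans (_ : \sum_s' \sum_s `|x s| * (M s s' - m) <= _).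
  apply: ler_sum => s' _; rewrite e; apply: le_trans (ler_norm_sum _ _ _) _.
  apply: ler_sum => s _; rewrite normrM [`|M s s' - m|]ger0_norm //.
  by rewrite subr_ge0.
rewrite exchange_big /= mulr_sumr; apply: ler_sum => s _.
rewrite -mulr_sumr sumrB M1 sumr_const mulrC.
by rewrite mulr_natr.
Qed.

Lemma contraction {R : realType} {S : finType} (Q : S -> S -> R) (s0 : S) :
  (forall s s', 0 <= Q s s') -> (forall s, \sum_s' Q s s' = 1) ->
  ergodic Q ->
  exists C, 0 <= C /\ forall x : S -> R, \sum_s x s = 0 ->
    \sum_s `|x s| <= C * \sum_s' `|app x Q s' - x s'|.
Proof.
move=> Q0 Q1 [k hk].
have [N0 N1] := nstep_stoch Q Q0 Q1 k.
have [m [m0 hm]] := min_entry s0 _ hk.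
set th := m * #|S|%:R.
have th0 : 0 < th.
  rewrite /th mulr_gt0 // ltr0n; apply/card_gt0P; by exists s0.
exists (k%:R / th); split; first by rewrite divr_ge0 ?ler0n // ltW.
move=> x x0.
have h1 := contraction_step _ _ x hm N1 x0.
have h2 := total_bound Q x Q0 Q1 k.
have h3 : \sum_s `|x s| <= \sum_s' `|app x (nstep Q k) s'| +
   \sum_s' `|app x (nstep Q k) s' - x s'|.
  rewrite -big_split /=; apply: ler_sum => s _.
  have := ler_normB (app x (nstep Q k) s) (app x (nstep Q k) s - x s).
  by rewrite opprB addrCA subrr addr0.
rewrite mulrAC ler_pdivlMr //.
move: h1 h2 h3; rewrite -/th.
set X := \sum_s `|x s|.
set Y := \sum_s' `|app x Q s' - x s'|.
set A1 := \sum_s' `|app x (nstep Q k) s'|.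
set A2 := \sum_s' `|_ - _|.
move=> h1 h2 h3; nra.
Qed.

Lemma sum_prod_dep {R : realType} {I : finType} {T_ : I -> finType}
  (F : forall i, T_ i -> R) :
  \sum_(f : {dffun forall i : I, T_ i}) \prod_i F i (f i) =
  \prod_i \sum_(t : T_ i) F i (t).
Proof.
rewrite (reindex (@dffun_of_fprod I T_)); last first.
  by apply/onW_bij/dffun_of_fprod_bij.
under eq_bigr do under eq_bigr do rewrite ffunE.
pose P_ i := [ffun t => F i t].
transitivity (\sum_(t : fprod T_) \prod_(i in I) P_ i (t i)).
  by apply: eq_bigr => t _; apply: eq_bigr => i _; rewrite ffunE.
rewrite big_fprod.
transitivity (\prod_i \sum_(t : T_ i) P_ i t); last first.
  by apply: eq_bigr => i _; apply: eq_bigr => t _; rewrite ffunE.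
under [RHS]eq_bigr do rewrite (big_tag (P_ ) ).
by rewrite bigA_distr_big_dep.
Qed.


Lemma lin3 {R : realType} {I : finType} (w X Y Z : I -> R) c1 c2 c3 :
  \sum_i w i * (c1 * X i + c2 * Y i + c3 * Z i) =
  c1 * (\sum_i w i * X i) + c2 * (\sum_i w i * Y i) + c3 * (\sum_i w i * Z i).
Proof.
rewrite !mulr_sumr -!big_split /=; apply: eq_bigr => i _; ring.
Qed.

Lemma chain_stoch {R : realType} {S : finType} {N} {A : 'I_N -> finType}
  (P : S -> jact A -> S -> R) (sg : S -> jact A -> R) :
  kernel_ok P -> (forall s a, 0 <= sg s a) -> (forall s, \sum_a sg s a = 1) ->
  (forall s s', 0 <= induced_chain P sg s s') /\
  (forall s, \sum_s' induced_chain P sg s s' = 1).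
Proof.
move=> [P0 P1] g0 g1; split.
  by move=> s s'; apply: sumr_ge0 => a _; apply: mulr_ge0.
move=> s; rewrite /induced_chain exchange_big /=.
under eq_bigr do rewrite -mulr_sumr P1 mulr1.
exact: g1.
Qed.

Lemma chain_mix {R : realType} {S : finType} {N} {A : 'I_N -> finType}
  (P : S -> jact A -> S -> R) (s0 s1 : S -> jact A -> R) d s s' :
  induced_chain P (mix s0 s1 d) s s' =
  (1 - d) * induced_chain P s0 s s' + d * induced_chain P s1 s s'.
Proof.
rewrite /induced_chain /mix !mulr_sumr -big_split /=.
by apply: eq_bigr => a _; ring.
Qed.

Lemma stat_spec {R : realType} {S : finType} {N} {A : 'I_N -> finType}
  (P : S -> jact A -> S -> R) (sg : S -> jact A -> R) :
  kernel_ok P -> (forall s a, 0 <= sg s a) -> (forall s, \sum_a sg s a = 1) ->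
  (0 < #|S|)%N -> stationary (induced_chain P sg) (stat_dist P sg).
Proof.
move=> hK g0 g1 hS; rewrite /stat_dist; apply: epsilon_spec.
have [c0 c1] := chain_stoch P sg hK g0 g1.
by apply: stat_exists.
Qed.

Lemma key_identity {R : realType} {S : finType} {N} {A : 'I_N -> finType}
  (P : S -> jact A -> S -> R) (r : S -> jact A -> R) (beta : R)
  (s0 s1 : S -> jact A -> R) (V : S -> R) (d : R) :
  (forall s, \sum_a s0 s a = 1) -> (forall s, \sum_a s1 s a = 1) ->
  poisson P r beta s0 V ->
  stationary (induced_chain P (mix s0 s1 d)) (stat_dist P (mix s0 s1 d)) ->
  J P r beta (mix s0 s1 d) - J P r beta s0 =
  d * (\sum_s stat_dist P (mix s0 s1 d) s *
         \sum_a s1 s a * Af P r beta s0 V s a)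
  + beta * (eta_avg P r (mix s0 s1 d) - eta_avg P r s0) ^+ 2.
Proof.
move=> h0 h1 hV [_ [pi1 pist]].
set sg := mix s0 s1 d.
set pi := stat_dist P sg.
set eta := eta_avg P r sg.
set eta0 := eta_avg P r s0.
set J0 := J P r beta s0.
have hsg : forall s, \sum_a sg s a = 1.
  move=> s; rewrite /sg /mix big_split /= -!mulr_sumr h0 h1; ring.
set G := fun s => \sum_a sg s a * fsur P r beta s0 s a.
have Ga : \sum_s pi s * G s =
    eta - beta * zeta P r sg - beta * (eta - eta0) ^+ 2.
  have e1 : forall s, G s = (1 - 2 * beta * (eta - eta0)) * (\sum_a sg s a * r s a)
      + (- beta) * (\sum_a sg s a * (r s a - eta) ^+ 2)
      + (2 * beta * (eta - eta0) * eta - beta * (eta - eta0) ^+ 2) * (\sum_a sg s a * 1).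
    move=> s; rewrite /G -(lin3 (sg s)).
    by apply: eq_bigr => a _; rewrite /fsur -/eta0; ring.
  rewrite (eq_bigr _ (fun s _ => congr1 (fun x => pi s * x) (e1 s))).
  rewrite lin3 /zeta -/pi -/eta.
  have -> : \sum_i pi i * (\sum_a sg i a * 1) = 1.
    by under eq_bigr do under eq_bigr do rewrite mulr1; under eq_bigr do rewrite hsg mulr1.
  rewrite /eta /eta_avg -/pi; ring.
set Ab := fun s => \sum_a s1 s a * Af P r beta s0 V s a.
have Gc : forall s, G s - J0 + \sum_s' induced_chain P sg s s' * V s' - V s
    = d * Ab s.
  move=> s.
  have eG : G s = (1 - d) * fsur_state P r beta s0 s
      + d * \sum_a s1 s a * fsur P r beta s0 s a.
    rewrite /G /fsur_state !mulr_sumr -big_split /=.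
    by apply: eq_bigr => a _; rewrite /sg /mix; ring.
  have eC : \sum_s' induced_chain P sg s s' * V s' =
      (1 - d) * (\sum_s' induced_chain P s0 s s' * V s')
      + d * (\sum_s' induced_chain P s1 s s' * V s').
    rewrite !mulr_sumr -big_split /=.
    by apply: eq_bigr => t _; rewrite chain_mix; ring.
  have eA : Ab s = \sum_a s1 s a * fsur P r beta s0 s a - J0
      + \sum_s' induced_chain P s1 s s' * V s' - V s.
    have e2 : forall a, s1 s a * Af P r beta s0 V s a =
       1 * (s1 s a * fsur P r beta s0 s a)
       + 1 * (\sum_s' s1 s a * P s a s' * V s')
       + (- J0 - V s) * s1 s a.
      move=> a; rewrite /Af /Qf -/J0.
      rewrite (_ : \sum_s' s1 s a * P s a s' * V s' = s1 s a * \sum_s' P s a s' * V s'); first ring.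
      by rewrite mulr_sumr; apply: eq_bigr => t _; rewrite mulrA.
    rewrite /Ab (eq_bigr _ (fun a _ => e2 a)) !big_split /= -!mulr_sumr h1.
    rewrite /induced_chain.
    under [X in _ = _ + X - _]eq_bigr do rewrite mulr_suml.
    rewrite [X in _ = _ + X - _]exchange_big /=.
    rewrite !mul1r; ring.
  have eV := hV s; rewrite -/J0 in eV.
  have eF : fsur_state P r beta s0 s = V s + J0
      - \sum_s' induced_chain P s0 s s' * V s' by rewrite {1}eV; ring.
  rewrite eA eG eC eF; ring.
have eCV : \sum_s pi s * (\sum_s' induced_chain P sg s s' * V s')
    = \sum_s pi s * V s.
  under eq_bigr do rewrite mulr_sumr.
  rewrite exchange_big /=; apply: eq_bigr => t _.
  have pt := pist t; rewrite -/sg -/pi in pt.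
  rewrite -pt mulr_suml; apply: eq_bigr => u _; ring.
have Sb : \sum_s pi s * (d * Ab s) = \sum_s pi s * G s - J0.
  rewrite -(eq_bigr _ (fun s _ => congr1 (fun x => pi s * x) (Gc s))).
  rewrite (eq_bigr (fun s => (pi s * G s + (- J0) * pi s) +
      (pi s * (\sum_s' induced_chain P sg s s' * V s') - pi s * V s)));
    last by move=> s _; ring.
  rewrite big_split /= big_split /= sumrB eCV subrr addr0 -mulr_sumr pi1; ring.
have eJ : J P r beta sg = eta - beta * zeta P r sg by [].
rewrite eJ.
have -> : d * \sum_s pi s * \sum_a s1 s a * Af P r beta s0 V s a =
   \sum_s pi s * (d * Ab s).
  rewrite mulr_sumr; apply: eq_bigr => s _; rewrite /Ab; ring.
rewrite Sb Ga; ring.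
Qed.


Lemma lin3' {R : realType} {I : finType} (X Y Z : I -> R) c1 c2 c3 :
  \sum_i (c1 * X i + c2 * Y i + c3 * Z i) =
  c1 * (\sum_i X i) + c2 * (\sum_i Y i) + c3 * (\sum_i Z i).
Proof. by rewrite !mulr_sumr -!big_split. Qed.

Lemma eqle {R : realType} (x y : R) : x = y -> x <= y.
Proof. by move=> ->. Qed.

Lemma elem_le_sum {R : realType} {I : finType} (F : I -> R) i :
  (forall j, 0 <= F j) -> F i <= \sum_j F j.
Proof.
move=> F0; rewrite (bigD1 i) //= lerDl; apply: sumr_ge0 => j _; exact: F0.
Qed.

Lemma sum_app {R : realType} {S : finType} (p : S -> R) (Q : S -> S -> R) :
  (forall s, \sum_s' Q s s' = 1) -> \sum_s' app p Q s' = \sum_s p s.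
Proof.
move=> Q1; rewrite /app exchange_big /=; apply: eq_bigr => s _.
by rewrite -mulr_sumr Q1 mulr1.
Qed.

Lemma Ebound {R : realType} {S : finType} {J : finType} (p q : S -> R)
  (sd s0 s1 : S -> J -> R) (d Bh : R) (h : S -> J -> R) :
  0 <= d -> (forall s, 0 <= q s) -> \sum_s q s = 1 ->
  (forall s a, 0 <= sd s a) -> (forall s, \sum_a sd s a = 1) ->
  (forall s a, 0 <= s0 s a) -> (forall s, \sum_a s0 s a = 1) ->
  (forall s a, 0 <= s1 s a) -> (forall s, \sum_a s1 s a = 1) ->
  (forall s a, sd s a = s0 s a + d * (s1 s a - s0 s a)) ->
  (forall s a, `|h s a| <= Bh) ->
  `|\sum_s p s * (\sum_a sd s a * h s a) - \sum_s q s * (\sum_a s0 s a * h s a)|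
    <= Bh * (\sum_s `|p s - q s| + 2 * d).
Proof.
move=> d0 q0 q1 sd0 sd1 g00 g01 g10 g11 esd hB.
have Bh0 : 0 <= Bh.
  have [s|] := pickP (@predT S); last first.
    by move=> S0; move: q1; rewrite big_pred0 // => /eqP; rewrite eq_sym oner_eq0.
  have [a|] := pickP (@predT J); last first.
    by move=> J0; move: (g01 s); rewrite big_pred0 // => /eqP; rewrite eq_sym oner_eq0.
  by move=> _ _; apply: le_trans (hB s a).
rewrite -sumrB.
rewrite (eq_bigr (fun s => \sum_a (p s * sd s a - q s * s0 s a) * h s a)); last first.
  move=> s _; rewrite !mulr_sumr -sumrB; apply: eq_bigr => a _; ring.
apply: le_trans (ler_norm_sum _ _ _) _.
apply: le_trans (_ : \sum_s \sum_a ((Bh * `|p s - q s|) * sd s a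
   + (Bh * q s * d) * s1 s a + (Bh * q s * d) * s0 s a) <= _).
  apply: ler_sum => s _; apply: le_trans (ler_norm_sum _ _ _) _.
  apply: ler_sum => a _.
  have e : p s * sd s a - q s * s0 s a =
     (p s - q s) * sd s a + q s * d * (s1 s a - s0 s a).
    rewrite esd; ring.
  have h1 : `|p s * sd s a - q s * s0 s a| <=
      `|p s - q s| * sd s a + q s * d * (s1 s a + s0 s a).
    rewrite e; apply: le_trans (ler_normD _ _) _.
    rewrite !normrM (ger0_norm (sd0 _ _)) (ger0_norm (q0 _)) (ger0_norm d0).
    apply: lerD => //; apply: ler_wpM2l; first by rewrite mulr_ge0.
    apply: le_trans (ler_normB _ _) _.
    by rewrite (ger0_norm (g10 _ _)) (ger0_norm (g00 _ _)).
  apply: le_trans (_ : `|p s * sd s a - q s * s0 s a| * Bh <= _).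
    rewrite normrM; apply: ler_pM; [exact: normr_ge0|exact: normr_ge0|exact: lexx|exact: hB].
  rewrite mulrC; apply: le_trans (_ : Bh * (`|p s - q s| * sd s a + q s * d * (s1 s a + s0 s a)) <= _).
    apply: ler_pM => //; exact: normr_ge0.
  apply: eqle; ring.
under eq_bigr do rewrite lin3' sd1 g11 g01.
rewrite (eq_bigr (fun s => Bh * `|p s - q s| + (2 * d * Bh) * q s)); last first.
  by move=> s _; ring.
by rewrite big_split /= -mulr_sumr -mulr_sumr q1; apply: eqle; ring.
Qed.

Local Open Scope classical_set_scope.

Theorem lemma2 (R : realType) (S : finType) (N : nat) (A : 'I_N -> finType)
  (P : S -> jact A -> S -> R) (r : S -> jact A -> R) (beta : R)
  (mu mu' : forall i : 'I_N, S -> A i -> R) (V : S -> R) :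
  kernel_ok P ->
  0 <= beta ->
  (forall nu : forall i : 'I_N, S -> A i -> R,
      (forall i, agent_policy (nu i)) -> ergodic (induced_chain P (joint nu))) ->
  (forall i, agent_policy (mu i)) ->
  (forall i, agent_policy (mu' i)) ->
  poisson P r beta (joint mu) V ->
  (fun d : R => (J P r beta (mix (joint mu) (joint mu') d)
                 - J P r beta (mix (joint mu) (joint mu') 0)) / d)
    @ 0^'+ -->
  \sum_(s : S) stat_dist P (joint mu) s *
     \sum_(a : jact A) joint mu' s a * Af P r beta (joint mu) V s a.
Proof.
move=> hK hb herg hmu hmu' hV.
case: (pickP (@predT S)) => [s0 _|S0]; last first.
  have z : forall F : S -> R, \sum_s F s = 0 by move=> F; rewrite big_pred0.
  have Jz : forall sg, J P r beta sg = 0.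
    by move=> sg; rewrite /J /eta_avg /zeta !z mulr0 subr0.
  rewrite z.
  have -> : (fun d : R => (J P r beta (mix (joint mu) (joint mu') d)
     - J P r beta (mix (joint mu) (joint mu') 0)) / d) = fun _ => 0.
    by apply/funext => d; rewrite !Jz subrr mul0r.
  apply/cvgrPdist_lt => e e0; apply: nearW => d; by rewrite subrr normr0.
have hS : (0 < #|S|)%N by apply/card_gt0P; exists s0.
have jp : forall nu : forall i : 'I_N, S -> A i -> R,
    (forall i, agent_policy (nu i)) ->
   (forall s a, 0 <= joint nu s a) /\ (forall s, \sum_a joint nu s a = 1).
  move=> nu hnu; split.
    move=> s a; rewrite /joint; apply: prodr_ge0 => i _.
    by case: (hnu i) => h _; apply: h.
  move=> s; rewrite /joint (sum_prod_dep (fun i b => nu i s b)).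
  by apply: big1 => i _; case: (hnu i) => _ ->.
have herg0 := herg mu hmu.
set g0 := joint mu in herg0 hV *.
set g1 := joint mu'.
have [g00 g01] := jp mu hmu.
have [g10 g11] := jp mu' hmu'.
have mix0 : mix g0 g1 0 = g0.
  by apply/funext => s; apply/funext => a; rewrite /mix subr0 mul1r mul0r addr0.
rewrite mix0.
have [c00 c01] := chain_stoch P g0 hK g00 g01.
have [c10 c11] := chain_stoch P g1 hK g10 g11.
have [C [C0 hC]] := contraction _ s0 c00 c01 herg0.
have [p00 [p01 p0st]] := stat_spec P g0 hK g00 g01 hS.
set p0 := stat_dist P g0 in p00 p01 p0st *.
have mixok : forall d, 0 <= d -> d <= 1 ->
    (forall s a, 0 <= mix g0 g1 d s a) /\ (forall s, \sum_a mix g0 g1 d s a = 1).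
  move=> d d0 d1; split.
    by move=> s a; rewrite /mix addr_ge0 // mulr_ge0 // subr_ge0.
  move=> s; rewrite /mix big_split /= -!mulr_sumr g01 g11; ring.
set Ab := fun s => \sum_a g1 s a * Af P r beta g0 V s a.
set BA := \sum_s `|Ab s|.
set Br := \sum_s \sum_a `|r s a|.
have BA0 : 0 <= BA by apply: sumr_ge0 => s _; exact: normr_ge0.
have Br0 : 0 <= Br by apply: sumr_ge0 => s _; apply: sumr_ge0 => a _; exact: normr_ge0.
have hAb : forall s, `|Ab s| <= BA.
  by move=> s; apply: (elem_le_sum (fun s => `|Ab s|)) => j; exact: normr_ge0.
have hr : forall s a, `|r s a| <= Br.
  move=> s a; apply: le_trans (elem_le_sum (fun a => `|r s a|) a _) _.
    by move=> j; exact: normr_ge0.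
  apply: (elem_le_sum (fun s => \sum_a `|r s a|)) => j.
  by apply: sumr_ge0 => b _; exact: normr_ge0.
set K1 := Br * (2 * C + 2).
set K := BA * (2 * C) + beta * K1 ^+ 2.
have K0 : 0 <= K.
  by rewrite addr_ge0 // mulr_ge0 // ?sqr_ge0 // mulr_ge0 // ler0n.
have bnd : forall d, 0 < d -> d <= 1 ->
  `|\sum_s p0 s * Ab s - (J P r beta (mix g0 g1 d) - J P r beta g0) / d| <= K * d.
  move=> d d0 d1.
  have [md0 md1] := mixok d (ltW d0) d1.
  have std := stat_spec P (mix g0 g1 d) hK md0 md1 hS.
  have KI := key_identity P r beta g0 g1 V d g01 g11 hV std.
  have [pd0 [pd1 pdst]] := std.
  set pd := stat_dist P (mix g0 g1 d) in pd0 pd1 pdst KI *.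
  have B1 : \sum_s `|pd s - p0 s| <= C * (2 * d).
    have x0 : \sum_s (pd s - p0 s) = 0 by rewrite sumrB pd1 p01 subrr.
    apply: le_trans (hC _ x0) _.
    apply: ler_pM => //; first by apply: sumr_ge0 => s _; exact: normr_ge0.
    have e : forall s', app (fun s => pd s - p0 s) (induced_chain P g0) s'
        - (pd s' - p0 s') = d * (app pd (induced_chain P g0) s'
                                 - app pd (induced_chain P g1) s').
      move=> s'.
      rewrite -app_sub.
      have h0' : app p0 (induced_chain P g0) s' = p0 s' := p0st s'.
      set a0 := app pd (induced_chain P g0) s'.
      set a1 := app pd (induced_chain P g1) s'.
      have hd : pd s' = (1 - d) * a0 + d * a1.
        rewrite -[LHS](pdst s') /a0 /a1 /app !mulr_sumr -big_split /=.
        by apply: eq_bigr => s _; rewrite chain_mix; ring.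
      rewrite h0' hd; ring.
    rewrite (eq_bigr _ (fun s' _ => congr1 (fun z : R => `|z|) (e s'))).
    have ap0 : forall Q, (forall s s', 0 <= Q s s') -> forall s', 0 <= app pd Q s'.
      by move=> Q Q0 s'; apply: sumr_ge0 => s _; apply: mulr_ge0.
    apply: le_trans (_ : \sum_s' d * (app pd (induced_chain P g0) s'
                                 + app pd (induced_chain P g1) s') <= _).
      apply: ler_sum => s' _; rewrite normrM (ger0_norm (ltW d0)).
      rewrite ler_pM2l //.
      apply: le_trans (ler_normB _ _) _.
      by rewrite !ger0_norm //; apply: ap0.
    rewrite -mulr_sumr big_split /= !sum_app // pd1; apply: eqle; ring.
  have esd : forall s a, mix g0 g1 d s a = g0 s a + d * (g1 s a - g0 s a).
    by move=> s a; rewrite /mix; ring.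
  have B2 : `|eta_avg P r (mix g0 g1 d) - eta_avg P r g0| <= K1 * d.
    rewrite /eta_avg -/pd -/p0.
    apply: le_trans (Ebound pd p0 (mix g0 g1 d) g0 g1 d Br r (ltW d0) p00 p01
       md0 md1 g00 g01 g10 g11 esd hr) _.
    rewrite /K1; nra.
  have B3 : `|\sum_s p0 s * Ab s - \sum_s pd s * Ab s| <= BA * (C * (2 * d)).
    rewrite -sumrB.
    apply: le_trans (ler_norm_sum _ _ _) _.
    apply: le_trans (_ : \sum_s `|pd s - p0 s| * BA <= _); last first.
      rewrite -mulr_suml mulrC; apply: ler_pM => //.
      by apply: sumr_ge0 => s _; exact: normr_ge0.
    apply: ler_sum => s _.
    rewrite -mulrBl normrM distrC.
    by apply: ler_pM => //; exact: normr_ge0.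
  set E := eta_avg P r (mix g0 g1 d) - eta_avg P r g0 in B2 KI.
  set X := \sum_s pd s * Ab s.
  have eF : (J P r beta (mix g0 g1 d) - J P r beta g0) / d = X + beta * E ^+ 2 / d.
    by rewrite KI /X /Ab; field; rewrite gt_eqF.
  rewrite eF.
  have hE2 : beta * E ^+ 2 / d <= beta * K1 ^+ 2 * d.
    rewrite ler_pdivrMr //.
    have h1 : E <= K1 * d by apply: le_trans B2; exact: ler_norm.
    have h2 : - E <= K1 * d by apply: le_trans B2; rewrite -normrN; exact: ler_norm.
    have : E ^+ 2 <= (K1 * d) ^+ 2 by nra.
    move=> h; nra.
  have hE0 : 0 <= beta * E ^+ 2 / d.
    by apply: divr_ge0; [apply: mulr_ge0 => //; exact: sqr_ge0|exact: ltW].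
  rewrite opprD addrA.
  apply: le_trans (ler_normB _ _) _.
  rewrite (ger0_norm hE0) /K.
  nra.
apply/cvgrPdist_lt => e e0.
have K10 : 0 < K + 1 by rewrite ltr_pwDr.
near=> d.
have d0 : 0 < d by near: d; exact: nbhs_right_gt.
have d1 : d < 1 by near: d; exact: nbhs_right_lt ltr01.
have de : d < e / (K + 1).
  by near: d; apply: nbhs_right_lt; rewrite divr_gt0.
apply: le_lt_trans (bnd d d0 (ltW d1)) _.
move: de; rewrite ltr_pdivlMr // => de.
nra.
Unshelve. all: by end_near.
Qed.
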